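(* For any $\varepsilon,\alpha\in(0,1)$ and any $\beta>0$, if $G=(V,E)$ is a finite graph and $\mathcal{P}'$ is a partition of $V$, then there exists an $(\varepsilon,\alpha,\beta)$-good coarsening of $\mathcal{P}'$.
   Context: A partition $\mathcal{P}$ is a coarsening of $\mathcal{P}'$ if every set of $\mathcal{P}$ is a union of sets of $\mathcal{P}'$. Let $\mathcal{P}'$ be $V=V'_1\sqcup\dots\sqcup V'_\ell$ and $\mathcal{P}$, given by $V=V_1\sqcup\dots\sqcup V_k$, a coarsening of it; for $i\in[k]$, $\mathcal{P}_i$ is the partition of $V_i$ into sets of $\mathcal{P}'$. For a partition $\mathcal{Q}$ of a vertex set into sets $U_1,\dots,U_m$ and $c>0$, $H(\mathcal{Q},c)$ is the graph on $[m]$ where $j\ne j'$ are adjacent iff $|E(U_j,U_{j'})|>c$, with $E(A,B)$ the set of edges of $G$ between $A$ and $B$. $\mathcal{P}$ is an $(\varepsilon,\alpha,\beta)$-good coarsening of $\mathcal{P}'$ if there exists $\theta\in\left[\varepsilon\left(\frac{\varepsilon\alpha}{\ell^2}\right)^{2^\ell},\varepsilon\right]$ such that (1) for every $i\in[k]$, $H(\mathcal{P}_i,\theta\beta)$ is connected; (2) for every $i\in[k]$, $|E(V_i,V\setminus V_i)|\le\theta^2\beta\alpha$. *)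

(* Defs.v *)
From HB Require Import structures.
From mathcomp Require Import all_boot all_order all_algebra.
From mathcomp Require Import reals.
Set Implicit Arguments. Unset Strict Implicit. Unset Printing Implicit Defensive.
Import Order.TTheory GRing.Theory Num.Theory.
Local Open Scope ring_scope.

(* A finite simple graph: vertex set the finType V, edge relation e
   (assumed symmetric and irreflexive in the theorem). *)

(* |E(A,B)| for disjoint A, B: number of pairs (x,y), x in A, y in B, with
   an edge xy.  For disjoint A and B each edge between them is counted once. *)
Definition nedges (V : finType) (e : rel V) (A B : {set V}) : nat :=
  (#|[set p : V * V | [&& p.1 \in A, p.2 \in B & e p.1 p.2]]|)%N.

Definition Hadj (R : realType) (V : finType) (e : rel V) (Q : {set {set V}}) (c : R)
  : rel {set V} :=
  fun U U' => [&& U \in Q, U' \in Q, U != U' & c < (nedges e U U')%:R].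

Definition H_connected (R : realType) (V : finType) (e : rel V)
  (Q : {set {set V}}) (c : R) : Prop :=
  forall U U', U \in Q -> U' \in Q -> connect (Hadj e Q c) U U'.

Definition coarsening (V : finType) (P P' : {set {set V}}) : Prop :=
  forall X, X \in P -> exists2 S : {set {set V}}, S \subset P' & X = cover S.

Definition subpart (V : finType) (P' : {set {set V}}) (X : {set V}) : {set {set V}} :=
  [set B in P' | B \subset X].

Definition good_coarsening (R : realType) (V : finType) (e : rel V)
  (eps alpha beta : R) (P P' : {set {set V}}) : Prop :=
  partition P [set: V] /\ coarsening P P' /\
  let ell := #|P'| in
  exists theta : R,
    [/\ eps * ((eps * alpha) / (ell ^ 2)%N%:R) ^+ (2 ^ ell)%N <= theta,
        theta <= eps,
        (forall X, X \in P -> H_connected e (subpart P' X) (theta * beta)) &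
        (forall X, X \in P -> (nedges e X (~: X))%:R <= theta ^+ 2 * beta * alpha)].

(* Main.v *)
Require Import Defs.
From HB Require Import structures.
From mathcomp Require Import all_boot all_order all_algebra.
From mathcomp Require Import reals.
From mathcomp Require Import ring lra zify.
Set Implicit Arguments. Unset Strict Implicit. Unset Printing Implicit Defensive.
Import Order.TTheory GRing.Theory Num.Theory.
Local Open Scope ring_scope.

Definition comp (R : realType) (V : finType) (e : rel V) (P' : {set {set V}})
  (c : R) (B : {set V}) : {set {set V}} :=
  [set B' in P' | connect (Hadj e P' c) B B'].

Definition cls (R : realType) (V : finType) (e : rel V) (P' : {set {set V}})
  (c : R) : {set {set {set V}}} := [set comp e P' c B | B in P'].

Lemma nedgesC (V : finType) (e : rel V) (es : symmetric e) (A B : {set V}) :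
  nedges e A B = nedges e B A.
Proof.
have swK : involutive (fun p : V * V => (p.2, p.1)) by case.
rewrite /nedges -(card_imset _ (inv_inj swK)); apply: eq_card => p.
apply/imsetP/idP.
  by case=> [[x y]]; rewrite !inE /= => /and3P[xA yB exy] ->; rewrite /= xA yB es.
case: p => x y; rewrite !inE /= => /and3P[xB yA exy].
by exists (y, x); rewrite // inE /= xB yA es.
Qed.

Lemma Hadj_sym (R : realType) (V : finType) (e : rel V) (es : symmetric e)
  (Q : {set {set V}}) (c : R) : symmetric (Hadj e Q c).
Proof. by move=> U U'; rewrite /Hadj (nedgesC es U) eq_sym andbCA. Qed.

Lemma Hadj_mono (R : realType) (V : finType) (e : rel V)
  (Q : {set {set V}}) (c' c : R) : c' <= c ->
  forall x y, Hadj e Q c x y -> Hadj e Q c' x y.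
Proof.
move=> le x y; rewrite /Hadj => /and4P[-> -> -> h]; exact: le_lt_trans le h.
Qed.

Lemma connect_mono (R : realType) (V : finType) (e : rel V)
  (Q : {set {set V}}) (c' c : R) : c' <= c ->
  forall x y, connect (Hadj e Q c) x y -> connect (Hadj e Q c') x y.
Proof.
move=> le; apply: connect_sub => u v h; apply: connect1; exact: Hadj_mono h.
Qed.

Lemma comp_eq (R : realType) (V : finType) (e : rel V) (es : symmetric e)
  (P' : {set {set V}}) (c : R) B B2 : B \in P' -> B2 \in P' ->
  (comp e P' c B == comp e P' c B2) = connect (Hadj e P' c) B B2.
Proof.
move=> BP B2P; have cs := sym_connect_sym (Hadj_sym es P' c).
apply/eqP/idP.
  move=> E; have : B2 \in comp e P' c B2 by rewrite inE B2P connect0.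
  by rewrite -E inE => /andP[_ ->].
move=> h; apply/setP => B'; rewrite !inE; congr (_ && _).
exact: (same_connect cs h B').
Qed.

Lemma cls_le (R : realType) (V : finType) (e : rel V) (es : symmetric e)
  (P' : {set {set V}}) (c' c : R) : c' <= c ->
  (#|cls e P' c'| <= #|cls e P' c|)%N /\
  (#|cls e P' c'| = #|cls e P' c| -> forall B B2, B \in P' -> B2 \in P' ->
     connect (Hadj e P' c') B B2 -> connect (Hadj e P' c) B B2).
Proof.
move=> le.
pose k := fun C : {set {set V}} => comp e P' c' (odflt set0 [pick x in C]).
have hk : {in P', comp e P' c' =1 k \o comp e P' c}.
  move=> B BP /=; rewrite /k; case: pickP => [x|none] /=.
    rewrite inE => /andP[xP cx]; apply/eqP; rewrite comp_eq //.
    exact: connect_mono cx.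
  by have := none B; rewrite inE BP connect0.
have E : cls e P' c' = k @: cls e P' c.
  by rewrite /cls -imset_comp; apply: eq_in_imset.
split; first by rewrite E leq_imset_card.
move=> Ecard B B2 BP B2P h.
have inj : {in cls e P' c &, injective k}.
  by apply/imset_injP; rewrite -E Ecard.
rewrite -comp_eq //; apply/eqP; apply: inj; rewrite ?imset_f //.
have hk' : forall B0, B0 \in P' -> k (comp e P' c B0) = comp e P' c' B0.
  by move=> B0 B0P; rewrite hk.
by rewrite !hk' //; apply/eqP; rewrite comp_eq.
Qed.

Lemma card_bigcup_le (I T : finType) (A : {pred I}) (F : I -> {set T}) :
  (#|\bigcup_(i in A) F i| <= \sum_(i in A) #|F i|)%N.
Proof.
elim/big_rec2: _ => [|i n U _ le]; first by rewrite cards0.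
by rewrite (leq_trans (leq_card_setU _ _).1) ?leq_add2l.
Qed.

Lemma pigeon (c : nat -> nat) (l : nat) : (forall j, c j.+1 <= c j)%N ->
  (c 0 <= l)%N -> exists j, (j <= l)%N /\ c j.+1 = c j.
Proof.
move=> dec c0.
have H : forall k, (exists j, (j < k)%N /\ c j.+1 = c j) \/ (c k + k <= c 0)%N.
  elim => [|k [IH|IH]]; first by right; rewrite addn0.
    by left; case: IH => j [jk E]; exists j; split => //; lia.
  case E: (c k.+1 == c k); first by left; exists k; split => //; apply/eqP.
  right; have := dec k; rewrite leq_eqVlt E /= => lt; lia.
case: (H l.+1) => [[j [jl E]]|bad]; last lia.
by exists j; split => //; lia.
Qed.


Lemma key (R : realType) (V : finType) (e : rel V) (P' : {set {set V}})
  (hP' : partition P' [set: V]) (c : R) B B1 x :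
  B1 \in P' -> x \in B1 -> x \in cover (comp e P' c B) -> B1 \in comp e P' c B.
Proof.
move: hP' => /and3P[_ tI _] B1P xB1 /bigcupP[B3 B3in xB3].
have B3P : B3 \in P' by move: B3in; rewrite inE => /andP[].
case: (eqVneq B1 B3) => [-> //|ne].
have := trivIsetP tI B1 B3 B1P B3P ne; rewrite -setI_eq0 => /eqP/setP/(_ x).
by rewrite !inE xB1 xB3.
Qed.

Lemma subpart_comp (R : realType) (V : finType) (e : rel V) (P' : {set {set V}})
  (hP' : partition P' [set: V]) (c : R) B :
  subpart P' (cover (comp e P' c B)) = comp e P' c B.
Proof.
apply/setP => B1; rewrite inE; case B1P: (B1 \in P'); last first.
  by rewrite /= inE B1P.
rewrite /=; apply/idP/idP => [sub|B1in]; last exact: bigcup_sup.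
have : B1 != set0.
  by apply: contraTneq B1P => ->; move: hP' => /and3P[_ _ ->].
case/set0Pn => x xB1; apply: (key hP' B1P xB1); exact: (subsetP sub).
Qed.

Lemma restrict_conn (R : realType) (V : finType) (e : rel V) (es : symmetric e)
  (P' : {set {set V}}) (c : R) B U U' :
  U \in comp e P' c B -> U' \in comp e P' c B ->
  connect (Hadj e (comp e P' c B) c) U U'.
Proof.
have cs := sym_connect_sym (Hadj_sym es P' c).
move=> Uin; rewrite inE => /andP[_ cU'].
have : connect (Hadj e P' c) U U'.
  move: Uin; rewrite inE => /andP[_ cU].
  by apply: connect_trans cU'; rewrite cs.
case/connectP => p pth ->; elim: p U Uin pth => [|y p IH] U Uin /=.
  by move=> _; exact: connect0.
move=> /andP[hUy pth].
have yin : y \in comp e P' c B.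
  move: Uin; rewrite !inE => /andP[_ cU]; move: (hUy) => /and4P[_ -> _ _] /=.
  exact: connect_trans cU (connect1 hUy).
apply: connect_trans (connect1 _) (IH y yin pth).
by move: hUy; rewrite /Hadj Uin yin => /and4P[_ _ -> ->].
Qed.

Lemma part_P (R : realType) (V : finType) (e : rel V) (es : symmetric e)
  (P' : {set {set V}}) (hP' : partition P' [set: V]) (c : R) :
  partition [set cover (comp e P' c B) | B in P'] [set: V].
Proof.
have hP'0 := hP'; move: hP'0 => /and3P[/eqP covP tI nz].
have Bin : forall B, B \in P' -> B \in comp e P' c B.
  by move=> B BP; rewrite inE BP connect0.
apply/and3P; split.
- apply/eqP/setP => x; rewrite inE.
  have : x \in cover P' by rewrite covP inE.
  case/bigcupP => B BP xB; apply/bigcupP; exists (cover (comp e P' c B)).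
    exact: imset_f.
  by apply/bigcupP; exists B => //; apply: Bin.
- apply/trivIsetP => X Y /imsetP[B BP ->] /imsetP[B2 B2P ->] ne.
  rewrite -setI_eq0; apply/eqP/setP => x; rewrite !inE.
  apply/negbTE/negP => /andP[xX xY]; move/negP: ne; apply; apply/eqP.
  have xX' := xX; case/bigcupP: xX' => B1 B1in xB1.
  have B1P : B1 \in P' by move: B1in; rewrite inE => /andP[].
  have := key hP' B1P xB1 xY; rewrite inE => /andP[_ c2].
  move: B1in; rewrite inE => /andP[_ c1].
  have cs := sym_connect_sym (Hadj_sym es P' c).
  congr cover; apply/eqP; rewrite comp_eq //.
  by apply: connect_trans c1 _; rewrite cs.
- apply/imsetP => [[B BP E]].
  have : B \subset set0 by rewrite E; apply: bigcup_sup; apply: Bin.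
  by rewrite subset0 => /eqP B0; move: nz; rewrite -B0 BP.
Qed.

Lemma edge_bound (R : realType) (V : finType) (e : rel V) (es : symmetric e)
  (P' : {set {set V}}) (hP' : partition P' [set: V]) (c' c : R) B :
  0 <= c' -> B \in P' ->
  (forall B1 B2, B1 \in P' -> B2 \in P' ->
     connect (Hadj e P' c') B1 B2 -> connect (Hadj e P' c) B1 B2) ->
  (nedges e (cover (comp e P' c B)) (~: cover (comp e P' c B)))%:R
    <= c' * (#|P'| * #|P'|)%N%:R.
Proof.
move=> c'0 BP stab.
have hP'0 := hP'; move: hP'0 => /and3P[/eqP covP tI nz].
set A := comp e P' c B; set C := P' :\: A.
pose Sq := fun q : {set V} * {set V} =>
  [set p : V * V | [&& p.1 \in q.1, p.2 \in q.2 & e p.1 p.2]].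
have sub : [set p : V * V | [&& p.1 \in cover A, p.2 \in ~: cover A & e p.1 p.2]]
    \subset \bigcup_(q in setX A C) Sq q.
  apply/subsetP => [[x y]]; rewrite !inE /= => /and3P[xX yX exy].
  case/bigcupP: xX => B1 B1in xB1.
  have : y \in cover P' by rewrite covP inE.
  case/bigcupP => B2 B2P yB2.
  apply/bigcupP; exists (B1, B2); last by rewrite inE /= xB1 yB2 exy.
  rewrite inE /= B1in /= /C in_setD B2P andbT.
  by apply: contra yX => B2in; apply/bigcupP; exists B2.
have le1 := leq_trans (subset_leq_card sub) (card_bigcup_le _ _).
apply: le_trans (_ : _ <= (\sum_(q in setX A C) #|Sq q|)%N%:R) _.
  by rewrite ler_nat.
rewrite natr_sum.
apply: le_trans (_ : _ <= \sum_(q in setX A C) c') _.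
  apply: ler_sum => q; rewrite inE => /andP[q1 q2].
  rewrite leNgt; apply/negP => lt.
  move: q1; rewrite inE => /andP[q1P cq1].
  move: q2; rewrite !inE => /andP[nq2A q2P].
  have ne : q.1 != q.2.
    apply: contraNneq nq2A => <-; by rewrite q1P cq1.
  have hadj : Hadj e P' c' q.1 q.2 by rewrite /Hadj q1P q2P ne.
  have cq := stab _ _ q1P q2P (connect1 hadj).
  by move: nq2A; rewrite q2P (connect_trans cq1 cq).
  rewrite sumr_const -[c' *+ _]mulr_natr; apply: ler_wpM2l => //; rewrite ler_nat cardsX leq_mul //.
  by apply: subset_leq_card; apply/subsetP => x; rewrite inE => /andP[].
by apply: subset_leq_card; apply: subsetDl.
Qed.

Fixpoint th (R : realType) (eps a : R) (n : nat) : R :=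
  if n is n'.+1 then th eps a n' ^+ 2 * a else eps.

Theorem lemma2p13 (R : realType) (eps alpha beta : R)
  (heps : 0 < eps < 1) (halpha : 0 < alpha < 1) (hbeta : 0 < beta)
  (V : finType) (e : rel V) (esym : symmetric e) (eirr : irreflexive e)
  (P' : {set {set V}}) (hP' : partition P' [set: V]) :
  exists P : {set {set V}}, good_coarsening e eps alpha beta P P'.
Proof.
case/andP: heps => he0 he1; case/andP: halpha => ha0 ha1.
set l := #|P'|.
set a : R := alpha / (l ^ 2)%N%:R.
have a0 : 0 <= a by rewrite divr_ge0 // ltW.
have a1 : a <= 1.
  case: (posnP l) => [l0|lpos].
    by rewrite /a l0 invr0 mulr0.
  rewrite ler_pdivrMr ?ltr0n ?expn_gt0 ?lpos // mul1r.
  by apply: le_trans (ltW ha1) _; rewrite ler1n expn_gt0 lpos.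
set t := th eps a.
have tS : forall j, t j.+1 = t j * t j * a by move=> j; rewrite /t /= expr2.
have tb : forall j, 0 <= t j <= eps.
  elim => [|j /andP[t0 te]] /=; first by rewrite lexx ltW.
  apply/andP; split; first by rewrite tS; apply: mulr_ge0 => //; apply: mulr_ge0.
  rewrite tS; nra.
have tdec : forall j, t j.+1 <= t j.
  move=> j; have /andP[t0 te] := tb j; rewrite tS; nra.
have tlow : forall j, eps * (eps * a) ^+ (2 ^ j - 1) <= t j.
  elim => [|j IH]; first by rewrite expn0 subnn expr0 mulr1.
  have ex : (2 ^ j.+1 - 1 = ((2 ^ j - 1) + (2 ^ j - 1)).+1)%N.
    have := expn_gt0 2 j; rewrite expnS; lia.
  rewrite ex exprS exprD tS.
  set y := (eps * a) ^+ (2 ^ j - 1).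
  have y0 : 0 <= y by rewrite exprn_ge0 // mulr_ge0 // ltW.
  have h : (eps * y) * (eps * y) <= t j * t j.
    by apply: ler_pM => //; rewrite mulr_ge0 // ltW.
  have -> : eps * ((eps * a) * (y * y)) = (eps * y) * (eps * y) * a by ring.
  by apply: ler_wpM2r.
have lec : forall j, t j.+1 * beta <= t j * beta.
  by move=> j; apply: ler_wpM2r; [exact: ltW | exact: tdec].
pose c j := #|cls e P' (t j * beta)|.
have cdec : forall j, (c j.+1 <= c j)%N.
  by move=> j; rewrite /c; exact: (cls_le esym P' (lec j)).1.
have c0 : (c 0 <= l)%N by exact: leq_imset_card.
case: (pigeon cdec c0) => j [jl Ej].
have stab := (cls_le esym P' (lec j)).2 Ej.
exists [set cover (comp e P' (t j * beta) B) | B in P'].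
split; first exact: part_P.
split.
  move=> X /imsetP[B BP ->]; exists (comp e P' (t j * beta) B) => //.
  by apply/subsetP => x; rewrite inE => /andP[].
exists (t j); split.
- have -> : eps * alpha / (l ^ 2)%N%:R = eps * a by rewrite /a mulrA.
  apply: le_trans (tlow j); apply: ler_wpM2l; first exact: ltW.
  apply: ler_wiXn2l; first by rewrite mulr_ge0 // ltW.
    by rewrite mulr_ile1 // ltW.
  have := leq_pexp2l (isT : (0 < 2)%N) jl; rewrite /l; lia.
- by case/andP: (tb j).
- move=> X /imsetP[B BP ->] U U'; rewrite subpart_comp //.
  exact: restrict_conn.
- move=> X /imsetP[B BP ->].
  have lpos : (0 < l)%N by apply/card_gt0P; exists B.
  have tj0 : 0 <= t j.+1 * beta.
    by rewrite mulr_ge0 //; [case/andP: (tb j.+1) | exact: ltW].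
  apply: le_trans (edge_bound esym hP' tj0 BP stab) _.
  have hl : (l ^ 2)%N%:R != 0 :> R by rewrite pnatr_eq0 -lt0n expn_gt0 lpos.
  rewrite le_eqVlt; apply/orP; left; apply/eqP.
  rewrite tS /a mulnn; field.
  by rewrite pnatr_eq0 -lt0n lpos.
Qed.
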